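(* Let $C_n>0$ and suppose the optimal dual variable satisfies $\lambda\le\kappa\, n^{1/3}/C_n^{1/3}$ for some constant $\kappa>0$. Then, with $x_t$ the predictions of FLH-OGD, $$\sum_{t=1}^n (y_t-x_t)^2-(y_t-u_t)^2\le c\,\log n\,\max\{n^{1/3}C_n^{2/3},1\},$$ where $c>0$ depends only on $B,G,\kappa$.
   Context: Squared loss game: $n\ge 3$, $B\ge 1$, $G\ge B$; for $t=1,\dots,n$ the learner predicts $x_t\in[-B,B]$, then the adversary reveals $y_t\in[-G,G]$. $[a,b]=\{a,\dots,b\}$. FLH-OGD: For each $j\in[n]$ a base learner $E^j$ is started at time $j$; it runs projected online gradient descent on $[-B,B]$ on the losses $x\mapsto (y_t-x)^2$, $t\ge j$: its first prediction $x^{(j)}_j$ is a fixed point of $[-B,B]$, and $x^{(j)}_{t+1}=\Pi\big(x^{(j)}_t-\tfrac{1}{2\tau}\cdot 2(x^{(j)}_t-y_t)\big)$ with $\tau=t-j+1$, $\Pi$ the projection onto $[-B,B]$. The FLH meta-algorithm with learning rate $\zeta$ keeps a probability vector $v_t=(v_t^{(1)},\dots,v_t^{(t)})$, $v_1=(1)$; it predicts $x_t=\sum_{j\le t}v_t^{(j)}x^{(j)}_t$; after $y_t$ is revealed it sets $\hat v^{(i)}_{t+1}=v_t^{(i)}e^{-\zeta(y_t-x_t^{(i)})^2}/\sum_{j\le t}v_t^{(j)}e^{-\zeta(y_t-x_t^{(j)})^2}$ for $i\le t$, then $v^{(t+1)}_{t+1}=1/(t+1)$ and $v^{(i)}_{t+1}=(1-\tfrac1{t+1})\hat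 v^{(i)}_{t+1}$. FLH-OGD uses $\zeta=1/(2(G+B)^2)$. Offline optimal: $u_1,\dots,u_n$ is an optimal solution of: minimize $\frac12\sum_{t=1}^n(y_t-\tilde u_t)^2$ subject to $\sum_{t=2}^{n}|\tilde u_t-\tilde u_{t-1}|\le C_n$ and $-B\le\tilde u_t\le B$; $\lambda\ge0$ is an optimal dual variable for the total variation constraint (with $\gamma^\pm_t\ge 0$ those of the box constraints), satisfying the KKT conditions: there are $s_t\in[-1,1]$ with $s_t=\mathrm{sign}(u_{t+1}-u_t)$ whenever $u_{t+1}\ne u_t$, $s_0=s_n=0$, $u_t-y_t=\lambda(s_t-s_{t-1})+\gamma_t^--\gamma_t^+$, $\lambda(\sum_{t=2}^n|u_t-u_{t-1}|-C_n)=0$, $\gamma_t^-(u_t+B)=0$, $\gamma_t^+(u_t-B)=0$. *)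

(* Defs.v *)
From Stdlib Require Import Reals Lra Lia Arith.
Open Scope R_scope.

(* Time indices are natural numbers t = 1..n; sequences are functions nat -> R,
   only their values on the relevant index ranges matter. *)

Fixpoint sum_1_to (t : nat) (f : nat -> R) : R :=
  match t with
  | O => 0
  | S k => sum_1_to k f + f (S k)
  end.

Definition clip (B x : R) : R := Rmax (- B) (Rmin B x).

(* Base learner E^j: projected OGD started at time j with initial point x0.
   ogd_aux B x0 y j k = x^{(j)}_{j+k}. *)
Fixpoint ogd_aux (B x0 : R) (y : nat -> R) (j k : nat) : R :=
  match k with
  | O => x0
  | S k' =>
      let x := ogd_aux B x0 y j k' in
      let t := (j + k')%nat in
      let tau := INR (t - j + 1) in
      clip B (x - / (2 * tau) * (2 * (x - y t)))
  end.

Definition base (B x0 : R) (y : nat -> R) (j t : nat) : R :=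
  ogd_aux B x0 y j (t - j).

Definition zeta (B G : R) : R := / (2 * (G + B) ^ 2).

Definition base_loss (B x0 : R) (y : nat -> R) (i t : nat) : R :=
  (y t - base B x0 y i t) ^ 2.

(* From v_t (a function on indices 1..t) to v_{t+1}. *)
Definition flh_update (B G x0 : R) (y : nat -> R) (t : nat) (v : nat -> R)
  : nat -> R :=
  fun i =>
    if Nat.eqb i (S t) then / INR (S t)
    else if andb (Nat.leb 1 i) (Nat.leb i t) then
      (1 - / INR (S t)) *
      (v i * exp (- zeta B G * base_loss B x0 y i t) /
       sum_1_to t (fun j => v j * exp (- zeta B G * base_loss B x0 y j t)))
    else 0.

(* flh_w k = v_{k+1} *)
Fixpoint flh_w (B G x0 : R) (y : nat -> R) (k : nat) : nat -> R :=
  match k with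
  | O => fun i => if Nat.eqb i 1 then 1 else 0
  | S k' => flh_update B G x0 y (S k') (flh_w B G x0 y k')
  end.

Definition flh_v (B G x0 : R) (y : nat -> R) (t : nat) : nat -> R :=
  flh_w B G x0 y (t - 1).

Definition flh_ogd_pred (B G x0 : R) (y : nat -> R) (t : nat) : R :=
  sum_1_to t (fun j => flh_v B G x0 y t j * base B x0 y j t).

Definition total_variation (n : nat) (u : nat -> R) : R :=
  sum_1_to (n - 1) (fun k => Rabs (u (S k) - u k)).

Definition tv_feasible (n : nat) (B Cn : R) (u : nat -> R) : Prop :=
  total_variation n u <= Cn /\ (forall t, (1 <= t <= n)%nat -> - B <= u t <= B).

Definition tv_objective (n : nat) (y u : nat -> R) : R :=
  / 2 * sum_1_to n (fun t => (y t - u t) ^ 2).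

Definition tv_optimal (n : nat) (B Cn : R) (y u : nat -> R) : Prop :=
  tv_feasible n B Cn u /\
  forall w, tv_feasible n B Cn w -> tv_objective n y u <= tv_objective n y w.

(* KKT conditions with multiplier lam for the TV constraint and gm (gamma^-),
   gp (gamma^+) for the box constraints; s indexed 0..n. *)
Definition tv_kkt (n : nat) (B Cn : R) (y u : nat -> R) (lam : R)
  (gm gp : nat -> R) : Prop :=
  0 <= lam /\
  (forall t, (1 <= t <= n)%nat -> 0 <= gm t /\ 0 <= gp t) /\
  exists s : nat -> R,
    (forall t, (t <= n)%nat -> -1 <= s t <= 1) /\
    (forall t, (1 <= t < n)%nat -> u (S t) > u t -> s t = 1) /\
    (forall t, (1 <= t < n)%nat -> u (S t) < u t -> s t = -1) /\
    s O = 0 /\ s n = 0 /\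
    (forall t, (1 <= t <= n)%nat ->
       u t - y t = lam * (s t - s (t - 1)%nat) + gm t - gp t) /\
    lam * (total_variation n u - Cn) = 0 /\
    (forall t, (1 <= t <= n)%nat -> gm t * (u t + B) = 0 /\ gp t * (u t - B) = 0).

Definition regret (n : nat) (y x u : nat -> R) : R :=
  sum_1_to n (fun t => (y t - x t) ^ 2 - (y t - u t) ^ 2).

(* Main.v *)
Require Import Defs.
From Stdlib Require Import Reals.
From Stdlib Require Import Lra Lia Arith Psatz Classical.
From Coquelicot Require Coquelicot.
Open Scope R_scope.


Lemma S_ext : forall n f g, (forall i, (1 <= i <= n)%nat -> f i = g i) ->
  sum_1_to n f = sum_1_to n g.
Proof. induction n; intros f g H; simpl; auto.
  rewrite (IHn f g) by (intros; apply H; lia). rewrite (H (S n)) by lia. auto. Qed.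

Lemma S_plus : forall n f g, sum_1_to n (fun i => f i + g i) = sum_1_to n f + sum_1_to n g.
Proof. induction n; intros; simpl; [lra|rewrite IHn; lra]. Qed.

Lemma S_scal : forall n c f, sum_1_to n (fun i => c * f i) = c * sum_1_to n f.
Proof. induction n; intros; simpl; [lra|rewrite IHn; lra]. Qed.

Lemma S_le : forall n f g, (forall i, (1 <= i <= n)%nat -> f i <= g i) ->
  sum_1_to n f <= sum_1_to n g.
Proof. induction n; intros f g H; simpl; [lra|].
  assert (sum_1_to n f <= sum_1_to n g) by (apply IHn; intros; apply H; lia).
  assert (f (S n) <= g (S n)) by (apply H; lia). lra. Qed.

Lemma S_zero : forall n, sum_1_to n (fun _ => 0) = 0.
Proof. induction n; simpl; [lra|rewrite IHn; lra]. Qed.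

Lemma S_nonneg : forall n f, (forall i, (1 <= i <= n)%nat -> 0 <= f i) -> 0 <= sum_1_to n f.
Proof. intros. rewrite <- (S_zero n). apply S_le. auto. Qed.

Lemma S_pos : forall n f, (1 <= n)%nat -> (forall i, (1 <= i <= n)%nat -> 0 < f i) -> 0 < sum_1_to n f.
Proof. intros n f Hn H. destruct n; [lia|]. simpl.
  assert (0 <= sum_1_to n f) by (apply S_nonneg; intros; apply Rlt_le, H; lia).
  assert (0 < f (S n)) by (apply H; lia). lra. Qed.

Lemma S_single : forall n f i, (forall j, (1 <= j <= n)%nat -> 0 <= f j) ->
  (1 <= i <= n)%nat -> f i <= sum_1_to n f.
Proof. induction n; intros f i H Hi; [lia|]. simpl.
  destruct (Nat.eq_dec i (S n)) as [->|Hne].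
  - assert (0 <= sum_1_to n f) by (apply S_nonneg; intros; apply H; lia). lra.
  - assert (f i <= sum_1_to n f) by (apply IHn; [intros; apply H; lia| lia]).
    assert (0 <= f (S n)) by (apply H; lia). lra. Qed.

Fixpoint sr (a m : nat) (f : nat -> R) : R :=
  match m with O => 0 | S k => sr a k f + f (a + k)%nat end.

Lemma S_sr : forall n f, sum_1_to n f = sr 1 n f.
Proof. induction n; intros; simpl; auto. rewrite IHn. reflexivity. Qed.

Lemma sr_ext : forall m a f g, (forall i, (a <= i < a + m)%nat -> f i = g i) ->
  sr a m f = sr a m g.
Proof. induction m; intros a f g H; simpl; auto.
  rewrite (IHm a f g) by (intros; apply H; lia). rewrite (H (a+m)%nat) by lia. auto. Qed.

Lemma sr_plus : forall m a f g, sr a m (fun i => f i + g i) = sr a m f + sr a m g.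
Proof. induction m; intros; simpl; [lra|rewrite IHm; lra]. Qed.

Lemma sr_minus : forall m a f g, sr a m (fun i => f i - g i) = sr a m f - sr a m g.
Proof. induction m; intros; simpl; [lra|rewrite IHm; lra]. Qed.

Lemma sr_scal : forall m a c f, sr a m (fun i => c * f i) = c * sr a m f.
Proof. induction m; intros; simpl; [lra|rewrite IHm; lra]. Qed.

Lemma sr_le : forall m a f g, (forall i, (a <= i < a + m)%nat -> f i <= g i) ->
  sr a m f <= sr a m g.
Proof. induction m; intros a f g H; simpl; [lra|].
  assert (sr a m f <= sr a m g) by (apply IHm; intros; apply H; lia).
  assert (f (a+m)%nat <= g (a+m)%nat) by (apply H; lia). lra. Qed.

Lemma sr_const : forall m a c, sr a m (fun _ => c) = INR m * c.
Proof. induction m; intros; simpl sr; [simpl; lra|rewrite IHm, S_INR; lra]. Qed.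

Lemma sr_nonneg : forall m a f, (forall i, (a <= i < a + m)%nat -> 0 <= f i) -> 0 <= sr a m f.
Proof. intros. apply Rle_trans with (sr a m (fun _ => 0)).
  rewrite sr_const; lra. apply sr_le; auto. Qed.

Lemma sr_app : forall k m a f, sr a (m + k) f = sr a m f + sr (a + m) k f.
Proof. induction k; intros; simpl.
  - rewrite Nat.add_0_r; lra.
  - rewrite Nat.add_succ_r. simpl. rewrite IHk. rewrite Nat.add_assoc. lra. Qed.

Lemma sr_S : forall a m f, sr a (S m) f = sr a m f + f (a + m)%nat.
Proof. reflexivity. Qed.
Lemma sr_0 : forall a f, sr a 0 f = 0.
Proof. reflexivity. Qed.


Section W.
Variables (B G x0 : R) (y : nat -> R).

Definition ee (t j : nat) := exp (- zeta B G * base_loss B x0 y j t).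
Definition ZZ (t : nat) := sum_1_to t (fun j => flh_v B G x0 y t j * ee t j).

Lemma W_props : forall k, (forall i, (1 <= i <= S k)%nat -> 0 < flh_w B G x0 y k i) /\
  sum_1_to (S k) (flh_w B G x0 y k) = 1.
Proof.
  induction k.
  - split.
    + intros i Hi. simpl. replace i with 1%nat by lia. simpl. lra.
    + simpl. lra.
  - destruct IHk as [Hp Hs].
    set (w := flh_w B G x0 y k).
    set (Z := sum_1_to (S k) (fun j => w j * exp (- zeta B G * base_loss B x0 y j (S k)))).
    assert (HZ : 0 < Z).
    { apply S_pos; [lia|]. intros. apply Rmult_lt_0_compat; [apply Hp; lia| apply exp_pos]. }
    assert (Hn : 0 < INR (S (S k))) by (apply lt_0_INR; lia).
    assert (Hn1 : / INR (S (S k)) < 1).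
    { rewrite <- Rinv_1. apply Rinv_lt_contravar. lra. rewrite S_INR. rewrite S_INR. pose proof (pos_INR k). lra. }
    split.
    + intros i Hi. simpl flh_w. unfold flh_update.
      destruct (Nat.eqb_spec i (S (S k))).
      * apply Rinv_0_lt_compat; auto.
      * replace (Nat.leb 1 i && Nat.leb i (S k))%bool with true.
        2:{ symmetry. apply andb_true_intro; split; apply Nat.leb_le; lia. }
        apply Rmult_lt_0_compat. lra.
        unfold Rdiv. apply Rmult_lt_0_compat; [|apply Rinv_0_lt_compat; exact HZ].
        apply Rmult_lt_0_compat; [apply Hp; lia| apply exp_pos].
    + change (sum_1_to (S k) (flh_update B G x0 y (S k) w) +
              flh_update B G x0 y (S k) w (S (S k)) = 1).
      unfold flh_update at 2. rewrite Nat.eqb_refl.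
      rewrite (S_ext _ _ (fun i => ((1 - / INR (S (S k))) * / Z) * (w i * exp (- zeta B G * base_loss B x0 y i (S k))))).
      * rewrite S_scal. fold Z. rewrite Rmult_assoc, Rinv_l by lra. ring.
      * intros i Hi. unfold flh_update.
        replace (Nat.eqb i (S (S k))) with false by (symmetry; apply Nat.eqb_neq; lia).
        replace (Nat.leb 1 i && Nat.leb i (S k))%bool with true.
        2:{ symmetry. apply andb_true_intro; split; apply Nat.leb_le; lia. }
        fold Z. unfold Rdiv. ring.
Qed.

Lemma v_pos : forall t i, (1 <= i <= t)%nat -> 0 < flh_v B G x0 y t i.
Proof. intros t i H. unfold flh_v. destruct t; [lia|]. replace (S t - 1)%nat with t by lia.
  apply (proj1 (W_props t)). lia. Qed.

Lemma v_sum : forall t, (1 <= t)%nat -> sum_1_to t (flh_v B G x0 y t) = 1.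
Proof. intros t H. unfold flh_v. destruct t; [lia|]. replace (S t - 1)%nat with t by lia.
  apply (proj2 (W_props t)). Qed.

Lemma v_le1 : forall t i, (1 <= i <= t)%nat -> flh_v B G x0 y t i <= 1.
Proof. intros. rewrite <- (v_sum t) by lia. apply S_single; auto.
  intros; apply Rlt_le, v_pos; lia. Qed.

Lemma v_start : forall a, (1 <= a)%nat -> flh_v B G x0 y a a = / INR a.
Proof. intros a Ha. unfold flh_v. destruct a; [lia|]. replace (S a - 1)%nat with a by lia.
  destruct a. simpl. lra.
  simpl flh_w. unfold flh_update. rewrite Nat.eqb_refl. reflexivity. Qed.

Lemma ZZ_pos : forall t, (1 <= t)%nat -> 0 < ZZ t.
Proof. intros. unfold ZZ. apply S_pos; auto. intros. apply Rmult_lt_0_compat;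
  [apply v_pos; lia|apply exp_pos]. Qed.

Lemma v_step : forall t a, (1 <= a <= t)%nat ->
  flh_v B G x0 y (S t) a = (1 - / INR (S t)) * (flh_v B G x0 y t a * ee t a / ZZ t).
Proof. intros t a H. unfold flh_v at 1. replace (S t - 1)%nat with t by lia.
  destruct t; [lia|]. simpl flh_w. unfold flh_update.
  replace (Nat.eqb a (S (S t))) with false by (symmetry; apply Nat.eqb_neq; lia).
  replace (Nat.leb 1 a && Nat.leb a (S t))%bool with true.
  2:{ symmetry. apply andb_true_intro; split; apply Nat.leb_le; lia. }
  unfold ZZ, ee, flh_v. replace (S t - 1)%nat with t by lia. reflexivity. Qed.

End W.

Module CC.
Import Coquelicot.Coquelicot.

Lemma ln_ge1 : forall u, 0 <= u -> u - u^2/2 <= ln (1+u).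
Proof.
  intros u Hu. destruct (Req_dec u 0) as [->|Hne].
  { rewrite Rplus_0_r, ln_1. lra. }
  set (phi := fun x => ln (1+x) - x + x^2/2).
  assert (Hd : forall c, 0 <= c <= u -> derivable_pt_lim phi c (/(1+c) - 1 + c)).
  { intros c Hc. apply is_derive_Reals. unfold phi. auto_derive.
    - lra.
    - field. lra. }
  destruct (MVT_cor2 phi (fun c => /(1+c) - 1 + c) 0 u ltac:(lra) Hd) as [c [Heq Hc]].
  unfold phi in Heq. rewrite Rplus_0_r, ln_1 in Heq.
  assert (/(1+c) - 1 + c = c^2/(1+c)) by (field; lra).
  assert (0 <= c^2/(1+c)) by (apply Rle_mult_inv_pos; nra).
  nra.
Qed.

Lemma ln_ge2 : forall u, -1 < u <= 0 -> u - u^2/(2*(1+u)) <= ln (1+u).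
Proof.
  intros u Hu. destruct (Req_dec u 0) as [->|Hne].
  { rewrite Rplus_0_r, ln_1. unfold Rdiv. lra. }
  set (phi := fun x => ln (1+x) - x + x^2/(2*(1+x))).
  assert (Hd : forall c, u <= c <= 0 -> derivable_pt_lim phi c (- c^2/(2*(1+c)^2))).
  { intros c Hc. apply is_derive_Reals. unfold phi. auto_derive.
    - lra.
    - field. lra. }
  destruct (MVT_cor2 phi _ u 0 ltac:(lra) Hd) as [c [Heq Hc]].
  unfold phi in Heq. rewrite Rplus_0_r, ln_1 in Heq.
  assert (0 <= c^2/(2*(1+c)^2)) by (apply Rle_mult_inv_pos; nra).
  replace (0 ^ 2 / (2 * (1 + 0))) with 0 in Heq by (simpl; field).
  assert (- c ^ 2 / (2 * (1 + c) ^ 2) = - (c^2/(2*(1+c)^2))) by (field; lra).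
  nra.
Qed.

Lemma ln_le_x1 : forall x, 0 < x -> ln x <= x - 1.
Proof. intros. pose proof (exp_ineq1_le (ln x)). rewrite exp_ln in H0; lra. Qed.

End CC.
Import CC.

Lemma tangent : forall z a w, 0 < z -> 2*z*a^2 <= 1 -> 2*z*w^2 <= 1 ->
  exp (- z * w^2) <= exp (- z * a^2) * (1 + 2*z*(a^2 - a*w)).
Proof.
  intros z a w Hz Ha Hw.
  set (u := 2*z*(a^2 - a*w)). set (E := z*(a-w)^2).
  assert (Hid : - z * w^2 = - z * a^2 + (u - E)) by (unfold u, E; ring).
  rewrite Hid, exp_plus. apply Rmult_le_compat_l; [apply Rlt_le, exp_pos|].
  assert (Hu : -1/4 <= u).
  { unfold u. assert (0 <= 2*z*(a - w/2)^2) by (apply Rmult_le_pos; [lra|apply pow2_ge_0]).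
    replace (2*z*(a^2 - a*w)) with (2*z*(a-w/2)^2 - (2*z*w^2)/4) by field. lra. }
  assert (Haw : 2*z*(a*w) <= 1).
  { assert ((2*z*(a*w))^2 <= 1) by (replace ((2*z*(a*w))^2) with ((2*z*a^2)*(2*z*w^2)) by ring;
      assert (0 <= 2*z*a^2) by nra; assert (0<= 2*z*w^2) by nra; nra). nra. }
  assert (HE : 0 <= E) by (unfold E; apply Rmult_le_pos; [lra|apply pow2_ge_0]).
  assert (Hl : u - E <= ln (1+u)).
  { destruct (Rle_lt_dec 0 u) as [H0|H0].
    - assert (u^2/2 <= E).
      { unfold u, E. assert (0 <= z*(a-w)^2*(1 - 2*z*a^2)) by
          (apply Rmult_le_pos; [apply Rmult_le_pos;[lra|apply pow2_ge_0]|lra]).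
        replace ((2 * z * (a ^ 2 - a * w)) ^ 2 / 2) with (z*(a-w)^2 - z*(a-w)^2*(1 - 2*z*a^2)) by field. lra. }
      pose proof (ln_ge1 u H0). lra.
    - assert (u^2/(2*(1+u)) <= E).
      { apply Rmult_le_reg_r with (2*(1+u)). lra.
        unfold Rdiv. rewrite Rmult_assoc, Rinv_l by lra. rewrite Rmult_1_r.
        unfold u, E. assert (0 <= 2*z*(a-w)^2*(1 - 2*z*(a*w))) by
          (apply Rmult_le_pos; [apply Rmult_le_pos;[lra|apply pow2_ge_0]|lra]).
        replace ((2 * z * (a ^ 2 - a * w)) ^ 2) with (z * (a - w) ^ 2 * (2 * (1 + 2 * z * (a ^ 2 - a * w))) - 2*z*(a-w)^2*(1 - 2*z*(a*w))) by ring. lra. }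
      pose proof (ln_ge2 u ltac:(lra)). lra. }
  rewrite <- (exp_ln (1+u)) by lra. destruct Hl as [Hl|Hl]; [left; apply exp_increasing; exact Hl| rewrite Hl; lra].
Qed.


Lemma ln_le' : forall x y, 0 < x -> x <= y -> ln x <= ln y.
Proof. intros x y Hx [H|H]. left; apply ln_increasing; auto. rewrite H; lra. Qed.

Lemma clip_in : forall B x, 0 <= B -> - B <= clip B x <= B.
Proof. intros. unfold clip. unfold Rmax, Rmin.
  destruct (Rle_dec B x); destruct (Rle_dec (-B) _); lra. Qed.

Lemma clip_nonexp : forall B x c, - B <= c <= B -> (clip B x - c)^2 <= (x - c)^2.
Proof. intros. unfold clip, Rmax, Rmin.
  destruct (Rle_dec B x); destruct (Rle_dec (-B) _); nra. Qed.

Lemma ogd_in : forall B x0 y j k, 0 <= B -> - B <= x0 <= B -> - B <= ogd_aux B x0 y j k <= B.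
Proof. intros. destruct k; simpl; auto. apply clip_in; auto. Qed.

Lemma base_in : forall B x0 y j t, 0 <= B -> - B <= x0 <= B -> - B <= base B x0 y j t <= B.
Proof. intros. unfold base. apply ogd_in; auto. Qed.

Section F.
Variables (B G x0 : R) (y : nat -> R).
Hypothesis HB : 1 <= B.
Hypothesis HBG : B <= G.
Hypothesis Hx0 : - B <= x0 <= B.
Let M := G + B.
Let z := zeta B G.
Let v := flh_v B G x0 y.
Let x := flh_ogd_pred B G x0 y.

Lemma z_pos : 0 < z.
Proof. unfold z, zeta. apply Rinv_0_lt_compat. nra. Qed.

Lemma z_M : 2 * z * M^2 = 1.
Proof. unfold z, zeta, M. field. nra. Qed.

Lemma x_in : forall t, (1 <= t)%nat -> - B <= x t <= B.
Proof.
  intros t Ht. unfold x, flh_ogd_pred. fold v.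
  assert (Hs : sum_1_to t (v t) = 1) by (apply v_sum; auto).
  split.
  - apply Rle_trans with (sum_1_to t (fun j => (-B) * v t j)).
    + rewrite S_scal. fold v. rewrite Hs. lra.
    + apply S_le. intros i Hi. pose proof (base_in B x0 y i t ltac:(lra) Hx0).
      pose proof (v_pos B G x0 y t i Hi). fold v in H0. nra.
  - apply Rle_trans with (sum_1_to t (fun j => B * v t j)).
    + apply S_le. intros i Hi. pose proof (base_in B x0 y i t ltac:(lra) Hx0).
      pose proof (v_pos B G x0 y t i Hi). fold v in H0. nra.
    + rewrite S_scal. fold v. rewrite Hs. lra.
Qed.

Lemma mixture : forall t, (1 <= t)%nat -> - G <= y t <= G ->
  ZZ B G x0 y t <= exp (- z * (y t - x t)^2).
Proof.
  intros t Ht Hy.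
  set (a := y t - x t).
  set (h := exp (- z * a^2)).
  pose proof (x_in t Ht) as Hxt.
  pose proof z_pos. pose proof z_M.
  assert (Ha : 2 * z * a^2 <= 1).
  { rewrite <- H0. apply Rmult_le_compat_l; [lra|]. unfold a, M. nra. }
  unfold ZZ.
  apply Rle_trans with (sum_1_to t (fun j => (h * (1 + 2*z*(a^2 - a * y t))) * v t j
                                         + (h * (2*z*a)) * (v t j * base B x0 y j t))).
  - apply S_le. intros j Hj. fold v.
    pose proof (base_in B x0 y j t ltac:(lra) Hx0).
    pose proof (v_pos B G x0 y t j Hj). fold v in H2.
    assert (ee B G x0 y t j <= h * (1 + 2*z*(a^2 - a*(y t - base B x0 y j t)))).
    { unfold ee, base_loss, h. fold z. apply tangent; auto.
      rewrite <- H0. apply Rmult_le_compat_l; [lra|]. unfold M. nra. }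
    assert (v t j * ee B G x0 y t j <= v t j * (h * (1 + 2*z*(a^2 - a*(y t - base B x0 y j t))))).
    { apply Rmult_le_compat_l; lra. }
    eapply Rle_trans; [exact H4|]. right. ring.
  - rewrite S_plus, !S_scal. unfold v; rewrite v_sum by auto. fold v.
    change (sum_1_to t (fun j => v t j * base B x0 y j t)) with (x t).
    right. unfold h. replace (x t) with (y t - a) by (unfold a; ring). ring.
Qed.

Lemma loss_step : forall t a, (1 <= a <= t)%nat -> - G <= y t <= G ->
  z * (y t - x t)^2 <= ln (v (S t) a) - ln (v t a) + z * base_loss B x0 y a t
                       + ln (INR (S t)) - ln (INR t).
Proof.
  intros t a Ha Hy.
  pose proof (mixture t ltac:(lia) Hy) as Hm.
  pose proof (ZZ_pos B G x0 y t ltac:(lia)) as HZ.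
  assert (Hl : ln (ZZ B G x0 y t) <= - z * (y t - x t)^2).
  { rewrite <- (ln_exp (- z * (y t - x t)^2)). apply ln_le'; auto. }
  pose proof (v_step B G x0 y t a Ha) as Hs. fold v in Hs.
  assert (Ht : 0 < INR t) by (apply lt_0_INR; lia).
  assert (HSt : 0 < INR (S t)) by (apply lt_0_INR; lia).
  assert (Hva : 0 < v t a) by (apply v_pos; lia).
  replace (1 - / INR (S t)) with (INR t * / INR (S t)) in Hs
    by (rewrite S_INR in *; field; lra).
  assert (Hln : ln (v (S t) a) = ln (INR t) - ln (INR (S t)) + ln (v t a)
                 + (- z * base_loss B x0 y a t) - ln (ZZ B G x0 y t)).
  { rewrite Hs. unfold ee. fold z. unfold Rdiv.
    rewrite !ln_mult, !ln_Rinv, ln_exp; try lra;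
      repeat (apply Rmult_lt_0_compat || apply Rinv_0_lt_compat || apply exp_pos); auto. }
  lra.
Qed.

Lemma flh_tele : forall m a, (1 <= a)%nat ->
  (forall t, (a <= t < a + m)%nat -> - G <= y t <= G) ->
  z * sr a m (fun t => (y t - x t)^2) <=
    ln (v (a + m)%nat a) - ln (v a a) + z * sr a m (fun t => base_loss B x0 y a t)
    + ln (INR (a + m)) - ln (INR a).
Proof.
  induction m; intros a Ha Hy.
  - rewrite sr_0, sr_0. rewrite Nat.add_0_r. lra.
  - rewrite !sr_S. rewrite Nat.add_succ_r.
    pose proof (IHm a Ha ltac:(intros; apply Hy; lia)).
    pose proof (loss_step (a + m) a ltac:(lia) ltac:(apply Hy; lia)). lra.
Qed.

Lemma flh_bound : forall m a, (1 <= a)%nat ->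
  (forall t, (a <= t < a + m)%nat -> - G <= y t <= G) ->
  sr a m (fun t => (y t - x t)^2 - base_loss B x0 y a t) <= 2 * M^2 * ln (INR (a + m)).
Proof.
  intros m a Ha Hy. pose proof (flh_tele m a Ha Hy).
  assert (ln (v (a+m)%nat a) <= 0).
  { rewrite <- ln_1. apply ln_le'. apply v_pos; lia. apply v_le1; lia. }
  assert (Hva : v a a = / INR a) by (apply v_start; auto).
  assert (0 < INR a) by (apply lt_0_INR; lia).
  rewrite Hva, ln_Rinv in H by auto.
  rewrite sr_minus.
  pose proof z_pos. pose proof z_M.
  assert (z * (sr a m (fun t => (y t - x t)^2) - sr a m (fun t => base_loss B x0 y a t))
           <= ln (INR (a + m))) by lra.
  replace (2 * M^2) with (/ z) by (field_simplify_eq; nra).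
  apply Rmult_le_reg_l with z; auto. rewrite <- Rmult_assoc, Rinv_r by lra. change (sr a m (base_loss B x0 y a)) with (sr a m (fun t => base_loss B x0 y a t)). exact (Rle_trans _ _ _ H4 (Req_le _ _ (eq_sym (Rmult_1_l _)))).
Qed.

End F.


Definition Hm (m : nat) := sr 1 m (fun k => / INR k).

Lemma Hm_le : forall m, (1 <= m)%nat -> Hm m <= 1 + ln (INR m).
Proof.
  induction m; intros H; [lia|].
  destruct m.
  - unfold Hm. simpl. rewrite ln_1. lra.
  - unfold Hm in *. rewrite sr_S.
    pose proof (IHm ltac:(lia)).
    assert (0 < INR (S m)) by (apply lt_0_INR; lia).
    assert (INR (S (S m)) = INR (S m) + 1) by (rewrite S_INR; ring).
    replace (1 + S m)%nat with (S (S m)) by lia.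
    assert (ln (INR (S m) / INR (S (S m))) <= INR (S m) / INR (S (S m)) - 1)
      by (apply ln_le_x1; apply Rdiv_lt_0_compat; lra).
    unfold Rdiv in H3. rewrite ln_mult, ln_Rinv in H3 by (try apply Rinv_0_lt_compat; lra).
    assert (INR (S m) * / INR (S (S m)) - 1 = - / INR (S (S m))) by (rewrite H2; field; lra).
    lra.
Qed.

Section O.
Variables (B G x0 : R) (y : nat -> R).
Hypothesis HB : 1 <= B.
Hypothesis HBG : B <= G.
Hypothesis Hx0 : - B <= x0 <= B.
Let M := G + B.

Lemma ogd_tele : forall m a c, (1 <= a)%nat -> - B <= c <= B ->
  (forall t, (a <= t < a + m)%nat -> - G <= y t <= G) ->
  sr a m (fun t => (y t - base B x0 y a t)^2 - (y t - c)^2) <=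
    - INR m * (ogd_aux B x0 y a m - c)^2 + M^2 * Hm m.
Proof.
  induction m; intros a c Ha Hc Hy.
  - rewrite sr_0. unfold Hm. rewrite sr_0. simpl. nra.
  - rewrite sr_S. unfold Hm. rewrite sr_S. fold (Hm m).
    pose proof (IHm a c Ha Hc ltac:(intros; apply Hy; lia)).
    assert (Hb : base B x0 y a (a + m) = ogd_aux B x0 y a m)
      by (unfold base; f_equal; lia).
    rewrite Hb.
    set (X := ogd_aux B x0 y a m).
    set (yy := y (a + m)%nat).
    assert (Hyy : - G <= yy <= G) by (apply Hy; lia).
    assert (HX : - B <= X <= B) by (apply ogd_in; lra).
    assert (Hnext : ogd_aux B x0 y a (S m) =
               clip B (X - / (2 * INR (S m)) * (2 * (X - yy)))).
    { cbn [ogd_aux]. unfold X, yy. replace (a + m - a + 1)%nat with (S m) by lia. reflexivity. }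
    rewrite Hnext.
    set (tau := INR (S m)).
    assert (Htau : tau = INR m + 1) by (unfold tau; rewrite S_INR; ring).
    assert (Hm0 : 0 <= INR m) by apply pos_INR.
    replace (INR (1 + m)) with tau by (unfold tau; f_equal; lia).
    pose proof (clip_nonexp B (X - / (2 * tau) * (2 * (X - yy))) c Hc) as Hcl.
    set (D' := (clip B (X - / (2 * tau) * (2 * (X - yy))) - c)^2) in *.
    set (g := X - yy).
    assert (Heq : (X - / (2 * tau) * (2 * (X - yy)) - c)^2 =
             (X-c)^2 - 2*g*(X-c)/tau + g^2/tau^2) by (unfold g; field; lra).
    rewrite Heq in Hcl.
    assert (Hg : g^2 <= M^2) by (unfold g, M; nra).
    assert (tau * D' <= tau * (X-c)^2 - 2*g*(X-c) + g^2/tau).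
    { apply Rle_trans with (tau * ((X-c)^2 - 2*g*(X-c)/tau + g^2/tau^2)).
      apply Rmult_le_compat_l; lra. right. field. lra. }
    assert (g^2/tau <= M^2 * / tau).
    { unfold Rdiv. apply Rmult_le_compat_r; [apply Rlt_le, Rinv_0_lt_compat; lra| exact Hg]. }
    assert (Hl : (yy - X)^2 - (yy - c)^2 = 2*g*(X-c) - (X-c)^2) by (unfold g; ring).
    rewrite Hl. assert (tau * (X-c)^2 = INR m * (X-c)^2 + (X-c)^2) by (rewrite Htau; ring). fold X in H. assert (M^2*(Hm m + /tau) = M^2*Hm m + M^2* /tau) by ring. lra.
Qed.

Lemma ogd_bound : forall m a c, (1 <= a)%nat -> (1 <= m)%nat -> - B <= c <= B ->
  (forall t, (a <= t < a + m)%nat -> - G <= y t <= G) ->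
  sr a m (fun t => (y t - base B x0 y a t)^2 - (y t - c)^2) <= M^2 * (1 + ln (INR m)).
Proof.
  intros. pose proof (ogd_tele m a c H H1 H2). pose proof (Hm_le m H0).
  assert (0 <= INR m * (ogd_aux B x0 y a m - c)^2) by (apply Rmult_le_pos; [apply pos_INR|apply pow2_ge_0]).
  assert (0 <= M^2) by apply pow2_ge_0.
  assert (M^2 * Hm m <= M^2 * (1 + ln (INR m))) by (apply Rmult_le_compat_l; auto).
  lra.
Qed.
End O.


Lemma sbp : forall k a (g s : nat -> R), (1 <= a)%nat ->
  sr a (S k) (fun t => g t * (s t - s (t - 1)%nat)) =
  g (a + k)%nat * s (a + k)%nat - g a * s (a - 1)%nat - sr a k (fun t => s t * (g (S t) - g t)).
Proof.
  induction k; intros a g s Ha.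
  - rewrite sr_S, !sr_0. rewrite Nat.add_0_r. ring.
  - rewrite sr_S, IHk by auto. rewrite sr_S.
    replace (a + S k - 1)%nat with (a + k)%nat by lia.
    replace (S (a + k)) with (a + S k)%nat by lia. ring.
Qed.

Lemma abs_bnd : forall x V, Rabs x <= V -> - V <= x <= V.
Proof. intros x V. unfold Rabs; destruct Rcase_abs; lra. Qed.

Section P.
Variables (n : nat) (B G lam : R) (y u gm gp s : nat -> R).
Hypothesis HB : 1 <= B.
Hypothesis Hlam : 0 <= lam.
Hypothesis Hu : forall t, (1 <= t <= n)%nat -> - B <= u t <= B.
Hypothesis Hs : forall t, (t <= n)%nat -> -1 <= s t <= 1.
Hypothesis Hs1 : forall t, (1 <= t < n)%nat -> u (S t) > u t -> s t = 1.
Hypothesis Hs2 : forall t, (1 <= t < n)%nat -> u (S t) < u t -> s t = -1.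
Hypothesis Hst : forall t, (1 <= t <= n)%nat -> u t - y t = lam * (s t - s (t - 1)%nat) + gm t - gp t.
Hypothesis Hcs : forall t, (1 <= t <= n)%nat -> gm t * (u t + B) = 0 /\ gp t * (u t - B) = 0.

Definition dd (u : nat -> R) (k : nat) := Rabs (u (S k) - u k).

Lemma var_step : forall k i, Rabs (u (i + k)%nat - u i) <= sr i k (dd u).
Proof.
  induction k; intros i.
  - rewrite Nat.add_0_r, sr_0. unfold Rminus. rewrite Rplus_opp_r, Rabs_R0. lra.
  - rewrite sr_S. pose proof (IHk i). unfold dd.
    replace (i + S k)%nat with (S (i + k)) by lia.
    pose proof (Rabs_triang (u (S (i+k)) - u (i+k)%nat) (u (i+k)%nat - u i)).
    replace (u (S (i + k)) - u (i + k)%nat + (u (i + k)%nat - u i)) with (u (S (i+k)) - u i) in H0 by ring.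
    unfold dd in *. lra.
Qed.

Lemma dd_nonneg : forall k, 0 <= dd u k.
Proof. intros; apply Rabs_pos. Qed.

Lemma var_sub : forall a mm i j, (a <= i <= j)%nat -> (j <= a + mm)%nat ->
  sr i (j - i) (dd u) <= sr a mm (dd u).
Proof.
  intros a mm i j H1 H2.
  replace mm with ((i - a) + ((j - i) + (a + mm - j)))%nat by lia.
  rewrite sr_app. rewrite sr_app.
  replace (a + (i - a))%nat with i by lia.
  assert (0 <= sr a (i - a) (dd u)) by (apply sr_nonneg; intros; apply dd_nonneg).
  assert (0 <= sr (i + (j - i)) (a + mm - j) (dd u)) by (apply sr_nonneg; intros; apply dd_nonneg).
  lra.
Qed.

Lemma var_pair : forall a mm i j, (a <= i <= a + mm)%nat -> (a <= j <= a + mm)%nat ->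
  Rabs (u j - u i) <= sr a mm (dd u).
Proof.
  intros a mm i j Hi Hj.
  destruct (Nat.le_ge_cases i j).
  - pose proof (var_step (j - i) i). replace (i + (j - i))%nat with j in H0 by lia.
    pose proof (var_sub a mm i j ltac:(lia) ltac:(lia)). lra.
  - pose proof (var_step (i - j) j). replace (j + (i - j))%nat with i in H0 by lia.
    pose proof (var_sub a mm j i ltac:(lia) ltac:(lia)). rewrite Rabs_minus_sym. lra.
Qed.

Lemma piece_comp : forall a mm, (1 <= a)%nat -> (a + mm <= n)%nat ->
  sr a mm (dd u) <= 1 ->
  exists c, - B <= c <= B /\
    sr a (S mm) (fun t => (y t - c)^2 - (y t - u t)^2)
      <= INR (S mm) * (sr a mm (dd u))^2 + 6 * lam * sr a mm (dd u).
Proof.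
  intros a mm Ha Hn HV.
  set (V := sr a mm (dd u)).
  assert (HV0 : 0 <= V) by (apply sr_nonneg; intros; apply dd_nonneg).
  assert (Ht0 : exists t0, (a <= t0 <= a + mm)%nat /\
     (forall t, (a <= t <= a + mm)%nat -> u t = B -> u t0 = B) /\
     (forall t, (a <= t <= a + mm)%nat -> u t = - B -> u t0 = - B)).
  { destruct (classic (exists t, (a <= t <= a + mm)%nat /\ u t = B)) as [[t1 [H1 H2]]|Hno].
    - exists t1. split; auto. split; auto. intros t Ht Hut.
      exfalso. pose proof (var_pair a mm t t1 Ht H1). rewrite H2, Hut in H.
      rewrite Rabs_right in H by lra. unfold V in *. lra.
    - destruct (classic (exists t, (a <= t <= a + mm)%nat /\ u t = - B)) as [[t1 [H1 H2]]|Hno2].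
      + exists t1. split; auto. split; auto. intros t Ht Hut. exfalso. apply Hno. eauto.
      + exists a. split; [lia|]. split; intros t Ht Hut; exfalso; [apply Hno|apply Hno2]; eauto. }
  destruct Ht0 as [t0 [Ht0 [HP1 HP2]]].
  set (c := u t0).
  exists c. split; [apply Hu; lia|].
  assert (Hg : forall t, (a <= t <= a + mm)%nat -> Rabs (u t - c) <= V)
    by (intros; apply var_pair; lia).
  rewrite (sr_ext _ _ _ (fun t => (u t - c)^2 + (-2*lam) * ((u t - c) * (s t - s (t-1)%nat))
                                   + (-2) * ((u t - c) * (gm t - gp t)))).
  2:{ intros t Ht. assert (Hyt := Hst t ltac:(lia)).
      replace (y t) with (u t - (lam * (s t - s (t - 1)%nat) + gm t - gp t)) by lra. ring. }
  rewrite !sr_plus, !sr_scal.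
  rewrite (sr_ext _ _ (fun t => (u t - c) * (gm t - gp t)) (fun _ => 0)).
  2:{ intros t Ht. destruct (Hcs t ltac:(lia)) as [Hm Hp].
      destruct (Req_dec (u t) B) as [HuB|HuB].
      - rewrite (HP1 t ltac:(lia) HuB) in *. unfold c. rewrite HP1 with t; [|lia|auto]. rewrite HuB. ring.
      - destruct (Req_dec (u t) (-B)) as [HuB'|HuB'].
        + unfold c. rewrite HP2 with t; [|lia|auto]. rewrite HuB'. ring.
        + assert (gm t = 0). { apply Rmult_integral in Hm. destruct Hm; auto. exfalso; lra. }
          assert (gp t = 0). { apply Rmult_integral in Hp. destruct Hp; auto. exfalso; lra. }
          rewrite H, H0. ring. }
  rewrite sr_const, Rmult_0_r, Rmult_0_r, Rplus_0_r.
  rewrite sbp by auto.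
  rewrite (sr_ext _ _ (fun t => s t * ((u (S t) - c) - (u t - c))) (dd u)).
  2:{ intros t Ht. unfold dd. replace (u (S t) - c - (u t - c)) with (u (S t) - u t) by ring.
      destruct (Rtotal_order (u (S t)) (u t)) as [Hlt|[Heq|Hgt]].
      - rewrite Hs2 by (auto; lia). rewrite Rabs_left by lra. ring.
      - rewrite Heq. unfold Rminus. rewrite Rplus_opp_r, Rabs_R0. ring.
      - rewrite Hs1 by (auto; lia). rewrite Rabs_right by lra. ring. }
  fold V.
  assert (H1 : sr a (S mm) (fun t => (u t - c)^2) <= sr a (S mm) (fun _ => V^2)).
  { apply sr_le. intros t Ht. pose proof (Hg t ltac:(lia)).
    rewrite <- pow2_abs. apply pow_incr. split; [apply Rabs_pos|auto]. }
  rewrite sr_const in H1.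
  assert (Hge := Hg (a + mm)%nat ltac:(lia)).
  assert (Hga := Hg a ltac:(lia)).
  assert (Hse := Hs (a + mm)%nat ltac:(lia)).
  assert (Hsa := Hs (a - 1)%nat ltac:(lia)).
  assert (Rabs ((u (a + mm)%nat - c) * s (a + mm)%nat) <= V).
  { rewrite Rabs_mult. apply Rle_trans with (V * 1). apply Rmult_le_compat; try apply Rabs_pos; auto.
    apply Rabs_le; lra. lra. }
  assert (Rabs ((u a - c) * s (a - 1)%nat) <= V).
  { rewrite Rabs_mult. apply Rle_trans with (V * 1). apply Rmult_le_compat; try apply Rabs_pos; auto.
    apply Rabs_le; lra. lra. }
  apply abs_bnd in H. apply abs_bnd in H0.
  assert (forall p q : R, p <= q -> -2*lam * p >= -2*lam*q) by (intros; nra).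
  nra.
Qed.
End P.


Section Greedy.
Variables (n : nat) (f d : nat -> R) (A L th lam : R).
Hypothesis Hd : forall k, 0 <= d k.
Hypothesis HA : 0 <= A.
Hypothesis HL : 1 <= L.
Hypothesis Hth : 0 < th.
Hypothesis Hlam : 0 <= lam.
Hypothesis Hpiece : forall p mm, (p + S mm <= n)%nat -> sr (S p) mm d <= th -> INR (S mm) <= L ->
  sr (S p) (S mm) f <= A + 1 + 6 * lam * sr (S p) mm d.

Lemma greedy_inv : forall k, (1 <= k <= n)%nat -> exists p mm N,
  (p + S mm = k)%nat /\ INR (S mm) <= L /\ sr (S p) mm d <= th /\
  sr 1 p f <= (A + 1) * N + 6 * lam * sr 1 p d /\
  N <= 2 * INR p / L + sr 1 p d / th.
Proof.
  induction k; intros Hk; [lia|].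
  destruct k.
  - exists 0%nat, 0%nat, 0. rewrite !sr_0. simpl. unfold Rdiv. repeat split; lra.
  - destruct (IHk ltac:(lia)) as [p [mm [N [Hk' [HmL [Hv [Hf HN]]]]]]].
    assert (HiL : 0 < / L) by (apply Rinv_0_lt_compat; lra).
    assert (Hith : 0 < / th) by (apply Rinv_0_lt_compat; lra).
    destruct (Rle_lt_dec (INR (S (S mm))) L) as [H1|H1];
    [destruct (Rle_lt_dec (sr (S p) (S mm) d) th) as [H2|H2]|].
    + exists p, (S mm), N. repeat split; auto. lia.
    + exists (S k), 0%nat, (N + 1). rewrite sr_0. split; [lia|]. split; [simpl; lra|]. split; [lra|]. split.
      * replace (S k) with (p + S mm)%nat at 1 by lia. rewrite sr_app.
        replace (1 + p)%nat with (S p) by lia.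
        pose proof (Hpiece p mm ltac:(lia) Hv ltac:(lra)).
        replace (S k) with (p + S mm)%nat by lia. rewrite (sr_app (S mm) p 1 d).
        replace (1 + p)%nat with (S p) by lia. rewrite (sr_S (S p) mm d).
        pose proof (Hd (S p + mm)%nat). assert (0 <= lam * d (S p + mm)%nat) by (apply Rmult_le_pos; lra). nra.
      * replace (S k) with (p + S mm)%nat by lia. rewrite (sr_app (S mm) p 1 d).
        replace (1 + p)%nat with (S p) by lia. rewrite plus_INR.
        unfold Rdiv in *.
        assert (th * / th = 1) by (field; lra).
        assert (1 < sr (S p) (S mm) d * / th).
        { apply Rmult_lt_reg_r with th; auto. rewrite Rmult_assoc, Rinv_l by lra. lra. }
        assert (0 <= INR (S mm) * / L) by (apply Rmult_le_pos; [apply pos_INR|lra]).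
        nra.
    + exists (S k), 0%nat, (N + 1). rewrite sr_0. split; [lia|]. split; [simpl; lra|]. split; [lra|]. split.
      * assert (Hv' : sr (S p) mm d <= th) by exact Hv.
        replace (S k) with (p + S mm)%nat at 1 by lia. rewrite sr_app.
        replace (1 + p)%nat with (S p) by lia.
        pose proof (Hpiece p mm ltac:(lia) Hv ltac:(lra)).
        replace (S k) with (p + S mm)%nat by lia. rewrite (sr_app (S mm) p 1 d).
        replace (1 + p)%nat with (S p) by lia. rewrite (sr_S (S p) mm d).
        pose proof (Hd (S p + mm)%nat). assert (0 <= lam * d (S p + mm)%nat) by (apply Rmult_le_pos; lra). nra.
      * replace (S k) with (p + S mm)%nat by lia. rewrite (sr_app (S mm) p 1 d).
        replace (1 + p)%nat with (S p) by lia. rewrite plus_INR.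
        unfold Rdiv in *.
        assert (INR (S (S mm)) = INR (S mm) + 1) by (rewrite S_INR; ring).
        assert (1 <= INR (S mm)) by (rewrite S_INR; pose proof (pos_INR mm); lra).
        assert (1 < 2 * INR (S mm) * / L).
        { apply Rmult_lt_reg_r with L; [lra|]. rewrite Rmult_assoc, Rinv_l by lra. lra. }
        assert (0 <= sr (S p) (S mm) d * / th) by (apply Rmult_le_pos; [apply sr_nonneg; auto|lra]).
        nra.
Qed.

Lemma greedy : (1 <= n)%nat ->
  sr 1 n f <= (A + 1) * (2 * INR n / L + sr 1 (n - 1) d / th + 1) + 6 * lam * sr 1 (n - 1) d.
Proof.
  intros Hn. destruct (greedy_inv n ltac:(lia)) as [p [mm [N [Hk [HmL [Hv [Hf HN]]]]]]].
  pose proof (Hpiece p mm ltac:(lia) Hv HmL).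
  replace n with (p + S mm)%nat by lia. rewrite sr_app. replace (1 + p)%nat with (S p) by lia.
  replace (p + S mm - 1)%nat with (p + mm)%nat by lia. rewrite sr_app. replace (1 + p)%nat with (S p) by lia.
  assert (0 <= sr (S p) mm d) by (apply sr_nonneg; auto).
  assert (INR p <= INR (p + S mm)) by (apply le_INR; lia).
  unfold Rdiv in *.
  assert (HiL : 0 < / L) by (apply Rinv_0_lt_compat; lra).
  assert (Hith : 0 < / th) by (apply Rinv_0_lt_compat; lra).
  assert (N <= 2 * INR (p + S mm) * / L + (sr 1 p d + sr (S p) mm d) * / th).
  { assert (INR p * / L <= INR (p + S mm) * / L) by (apply Rmult_le_compat_r; lra).
    assert (sr 1 p d * / th <= (sr 1 p d + sr (S p) mm d) * / th) by (apply Rmult_le_compat_r; lra).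
    lra. }
  nra.
Qed.
End Greedy.


Lemma rp_pos : forall x r, 0 < Rpower x r.
Proof. intros. unfold Rpower. apply exp_pos. Qed.

Lemma rp3 : forall x, 0 < x -> (Rpower x (1/3))^3 = x.
Proof.
  intros x Hx. rewrite <- Rpower_pow by apply rp_pos. rewrite Rpower_mult.
  replace (1/3 * INR 3) with 1 by (simpl; field). apply Rpower_1; auto.
Qed.

Lemma rp23 : forall x, Rpower x (2/3) = (Rpower x (1/3))^2.
Proof. intros. replace (2/3) with (1/3 + 1/3) by field. rewrite Rpower_plus. ring. Qed.

Lemma ln3 : forall n, (3 <= n)%nat -> 1 <= ln (INR n).
Proof.
  intros n Hn. assert (3 <= INR n) by (replace 3 with (INR 3) by (simpl; ring); apply le_INR; auto).
  rewrite <- (ln_exp 1). apply ln_le'. apply exp_pos. pose proof exp_le_3. lra.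
Qed.

Lemma ln_n1 : forall n, (3 <= n)%nat -> ln (INR n + 1) <= 2 * ln (INR n).
Proof.
  intros n Hn. assert (3 <= INR n) by (replace 3 with (INR 3) by (simpl; ring); apply le_INR; auto).
  replace (2 * ln (INR n)) with (ln (INR n * INR n)) by (rewrite ln_mult by lra; ring).
  apply ln_le'; nra.
Qed.

Theorem lemma3 :
  forall (B G kappa : R),
    1 <= B -> B <= G -> 0 < kappa ->
    exists c : R, 0 < c /\
      forall (n : nat) (Cn x0 lam : R) (y u gm gp : nat -> R),
        (3 <= n)%nat ->
        0 < Cn ->
        (forall t, (1 <= t <= n)%nat -> - G <= y t <= G) ->
        - B <= x0 <= B ->
        tv_optimal n B Cn y u ->
        tv_kkt n B Cn y u lam gm gp ->
        lam <= kappa * Rpower (INR n) (1 / 3) / Rpower Cn (1 / 3) ->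
        regret n y (flh_ogd_pred B G x0 y) u
          <= c * ln (INR n) * Rmax (Rpower (INR n) (1 / 3) * Rpower Cn (2 / 3)) 1.
Proof.
  intros B G kappa HB HBG Hk.
  set (M := G + B).
  assert (HM2 : 4 <= M^2) by (unfold M; nra).
  exists (4*(6*M^2+1) + 6*kappa + M^2). split; [nra|].
  intros n C x0 lam y u gm gp Hn HC Hy Hx0 Hopt Hkkt Hlam.
  destruct Hopt as [[HTV Hu] _].
  destruct Hkkt as [Hl0 [_ [s [Hs [Hs1 [Hs2 [_ [_ [Hst [_ Hcs]]]]]]]]]].
  assert (HnR : 3 <= INR n) by (replace 3 with (INR 3) by (simpl; ring); apply le_INR; auto).
  pose proof (ln3 n Hn) as Hl1.
  set (l := ln (INR n)) in *.
  rewrite rp23.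
  set (a3 := Rpower (INR n) (1/3)) in *.
  set (c3 := Rpower C (1/3)) in *.
  assert (Ha3 : 0 < a3) by apply rp_pos.
  assert (Hc3 : 0 < c3) by apply rp_pos.
  assert (Ha33 : a3^3 = INR n) by (apply rp3; lra).
  assert (Hc33 : c3^3 = C) by (apply rp3; lra).
  set (P := a3 * c3^2).
  assert (HP : 0 < P) by (unfold P; nra).
  set (X := Rmax P 1).
  assert (HXP : P <= X) by apply Rmax_l.
  assert (HX1 : 1 <= X) by apply Rmax_r.
  unfold regret. rewrite S_sr.
  set (f := fun t => (y t - flh_ogd_pred B G x0 y t)^2 - (y t - u t)^2).
  change (sr 1 n (fun t => (y t - flh_ogd_pred B G x0 y t)^2 - (y t - u t)^2)) with (sr 1 n f).
  assert (HlX : 0 <= l * X) by nra.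
  destruct (Rle_lt_dec c3 a3) as [Hca|Hca].
  -
    set (L := a3^2 / c3^2). set (th := c3 / a3). set (A := 6 * M^2 * l).
    assert (HL : 1 <= L).
    { unfold L. apply Rmult_le_reg_r with (c3^2). nra. unfold Rdiv. rewrite Rmult_assoc, Rinv_l by nra. nra. }
    assert (Hth : 0 < th) by (unfold th; apply Rdiv_lt_0_compat; auto).
    assert (Hth1 : th <= 1).
    { unfold th. apply Rmult_le_reg_r with a3. auto. unfold Rdiv. rewrite Rmult_assoc, Rinv_l by nra. lra. }
    assert (HLth : L * th^2 = 1) by (unfold L, th; field; lra).
    assert (HTV' : sr 1 (n - 1) (dd u) <= C).
    { unfold total_variation in HTV. rewrite S_sr in HTV. exact HTV. }
    assert (HTV0 : 0 <= sr 1 (n - 1) (dd u)) by (apply sr_nonneg; intros; apply dd_nonneg).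
    assert (Hg := greedy n f (dd u) A L th lam (dd_nonneg u) ltac:(unfold A; nra) HL Hth Hl0).
    assert (Hpc : forall p mm, (p + S mm <= n)%nat -> sr (S p) mm (dd u) <= th -> INR (S mm) <= L ->
      sr (S p) (S mm) f <= A + 1 + 6 * lam * sr (S p) mm (dd u)).
    { intros p mm Hpm HV HmL.
      set (V := sr (S p) mm (dd u)) in *.
      assert (HV0 : 0 <= V) by (apply sr_nonneg; intros; apply dd_nonneg).
      destruct (piece_comp n B lam y u gm gp s HB Hl0 Hu Hs Hs1 Hs2 Hst Hcs (S p) mm
                  ltac:(lia) ltac:(lia) ltac:(fold V; lra)) as [c [Hc Hpc]].
      fold V in Hpc.
      assert (Hyr : forall t, (S p <= t < S p + S mm)%nat -> - G <= y t <= G) by (intros; apply Hy; lia).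
      pose proof (flh_bound B G x0 y HB HBG Hx0 (S mm) (S p) ltac:(lia) Hyr) as Hf1.
      pose proof (ogd_bound B G x0 y HB Hx0 (S mm) (S p) c ltac:(lia) ltac:(lia) Hc Hyr) as Hf2.
      rewrite (sr_ext _ _ f (fun t => ((y t - flh_ogd_pred B G x0 y t)^2 - base_loss B x0 y (S p) t)
                  + ((y t - base B x0 y (S p) t)^2 - (y t - c)^2)
                  + ((y t - c)^2 - (y t - u t)^2))).
      2:{ intros. unfold f, base_loss. ring. }
      rewrite !sr_plus.
      assert (ln (INR (S p + S mm)) <= 2 * l).
      { apply Rle_trans with (ln (INR n + 1)); [|apply ln_n1; auto].
        apply ln_le'. apply lt_0_INR; lia. rewrite <- S_INR. apply le_INR. lia. }
      assert (ln (INR (S mm)) <= l).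
      { apply ln_le'. apply lt_0_INR; lia. apply le_INR. lia. }
      assert (INR (S mm) * V^2 <= 1).
      { rewrite <- HLth. apply Rmult_le_compat; try apply pos_INR; try nra. }
      fold M in Hf1, Hf2.
      assert (M^2 * ln (INR (S p + S mm)) <= M^2 * (2 * l)) by (apply Rmult_le_compat_l; nra).
      assert (M^2 * ln (INR (S mm)) <= M^2 * l) by (apply Rmult_le_compat_l; nra).
      unfold A. nra. }
    specialize (Hg Hpc ltac:(lia)).
    assert (H2n : 2 * INR n / L = 2 * P) by (unfold L, P; rewrite <- Ha33; field; lra).
    assert (Hth2 : sr 1 (n - 1) (dd u) / th <= P).
    { apply Rle_trans with (C / th). unfold Rdiv. apply Rmult_le_compat_r; auto.
      apply Rlt_le, Rinv_0_lt_compat; auto.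
      right. unfold th, P. rewrite <- Hc33. field. lra. }
    assert (Hlc : lam * sr 1 (n - 1) (dd u) <= kappa * P).
    { apply Rle_trans with (lam * C). apply Rmult_le_compat_l; auto.
      apply Rle_trans with (kappa * a3 / c3 * C). apply Rmult_le_compat_r; lra.
      right. unfold P. rewrite <- Hc33. field. lra. }
    assert (HA1 : A + 1 <= (6 * M^2 + 1) * l) by (unfold A; nra).
    assert (H3P : 2 * INR n / L + sr 1 (n - 1) (dd u) / th + 1 <= 4 * X) by lra.
    assert (0 <= A + 1) by (unfold A; nra).
    assert ((A + 1) * (2 * INR n / L + sr 1 (n - 1) (dd u) / th + 1) <= (6 * M^2 + 1) * l * (4 * X)).
    { assert (0 <= sr 1 (n - 1) (dd u) / th) by (unfold Rdiv; apply Rmult_le_pos; [lra|apply Rlt_le, Rinv_0_lt_compat; lra]).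
      apply Rmult_le_compat; try lra. }
    assert (kappa * P <= kappa * (l * X)) by (apply Rmult_le_compat_l; nra).
    nra.
  -
    assert (Hs1' : sr 1 n f <= sr 1 n (fun _ => M^2)).
    { apply sr_le. intros t Ht. unfold f. pose proof (Hy t ltac:(lia)).
      pose proof (x_in B G x0 y HB Hx0 t ltac:(lia)). unfold M.
      assert (0 <= (y t - u t)^2) by apply pow2_ge_0. nra. }
    rewrite sr_const in Hs1'.
    assert (INR n <= P) by (unfold P; rewrite <- Ha33; assert (a3^2 <= c3^2) by nra; replace (a3^3) with (a3 * a3^2) by ring; apply Rmult_le_compat_l; lra).
    assert (M^2 * P <= M^2 * (l * X)) by (apply Rmult_le_compat_l; nra).
    nra.
Qed.
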